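(* Let $(\mathcal{L},\mathcal{D}(\mathcal{L}))$ be the generator of a $C_0$-contraction semigroup $(e^{t\mathcal{L}})_{t\ge0}$ on a Banach space $\mathcal{X}$, let $M\in\mathcal{B}(\mathcal{X})$ be a contraction, and let $P\in\mathcal{B}(\mathcal{X})$ be a projection such that $\|M^n-P\|_\infty\le\delta^n$ for some $\delta\in(0,1)$ and all $n\in\mathbb{N}$. Assume there is $b\ge0$ such that for all $t\ge0$ $$\|Pe^{t\mathcal{L}}(\mathbf{1}-P)\|_\infty\le tb\quad\text{and}\quad\|(\mathbf{1}-P)e^{t\mathcal{L}}P\|_\infty\le tb.$$ If $(P\mathcal{L}P,\mathcal{D}(\mathcal{L}P))$ is the generator of a $C_0$-semigroup, then for every $t\ge0$ there is a constant $c(t,b)>0$, depending on $t$ and $b$ but not on $n$, such that for all $n\in\mathbb{N}$ and all $x\in\mathcal{D}((\mathcal{L}P)^2)$ $$\Big\|\big(Me^{\frac{t}{n}\mathcal{L}}\big)^nx-e^{tP\mathcal{L}P}Px\Big\|\le\frac{c(t,b)}{n}\big(\|x\|+\|\mathcal{L}Px\|+\|(\mathcal{L}P)^2x\|\big)+\delta^n\|x\|.$$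
   Context: $\mathcal{B}(\mathcal{X})$ denotes the bounded linear operators on $\mathcal{X}$ with operator norm $\|\cdot\|_\infty$; $\mathbf{1}$ is the identity. A contraction is an operator of norm at most $1$; a projection is a bounded operator $P$ with $P^2=P$. A $C_0$-contraction semigroup is a strongly continuous semigroup with $\|e^{t\mathcal{L}}\|_\infty\le1$; its generator is $\mathcal{L}x=\lim_{h\downarrow0}(e^{h\mathcal{L}}x-x)/h$ on $\mathcal{D}(\mathcal{L})$, and a $C_0$-semigroup is denoted $e^{t\mathcal{K}}$ by its generator $\mathcal{K}$. Compositions of unbounded operators have natural domains: $\mathcal{D}(\mathcal{L}P)=\{x: Px\in\mathcal{D}(\mathcal{L})\}$, $\mathcal{D}((\mathcal{L}P)^2)=\{x\in\mathcal{D}(\mathcal{L}P):\mathcal{L}Px\in\mathcal{D}(\mathcal{L}P)\}$, and $P\mathcal{L}P$ is considered on $\mathcal{D}(\mathcal{L}P)$. *)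

(* Defs.v *)
From HB Require Import structures.
From mathcomp Require Import all_boot all_order all_algebra.
From mathcomp Require Import all_classical all_reals all_analysis.
Set Implicit Arguments. Unset Strict Implicit. Unset Printing Implicit Defensive.
Import Order.TTheory GRing.Theory Num.Theory.
Import numFieldNormedType.Exports.
Local Open Scope classical_set_scope.
Local Open Scope ring_scope.

Section Defs.
Context {R : realType} {X : normedModType R}.

Definition lin_op (A : X -> X) : Prop :=
  forall (a : R) (x y : X), A (a *: x + y) = a *: A x + A y.

Definition op_norm_le (A : X -> X) (c : R) : Prop :=
  forall x : X, `|A x| <= c * `|x|.

Definition bounded_op (A : X -> X) : Prop :=
  lin_op A /\ exists c : R, op_norm_le A c.

Definition contraction_op (A : X -> X) : Prop := lin_op A /\ op_norm_le A 1.

Definition projection_op (P : X -> X) : Prop :=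
  bounded_op P /\ forall x, P (P x) = P x.

(* C0-semigroup (S t)_{t >= 0}; values at t < 0 are irrelevant *)
Definition C0_semigroup (S : R -> X -> X) : Prop :=
  [/\ forall t, 0 <= t -> bounded_op (S t),
      forall x, S 0 x = x,
      forall s t x, 0 <= s -> 0 <= t -> S (s + t) x = S s (S t x) &
      forall x, S t x @[t --> 0^'+] --> x].

Definition C0_contraction_semigroup (S : R -> X -> X) : Prop :=
  C0_semigroup S /\ forall t, 0 <= t -> op_norm_le (S t) 1.

Definition generator (S : R -> X -> X) (D : set X) (L : X -> X) : Prop :=
  (forall x, D x <-> exists l : X, h^-1 *: (S h x - x) @[h --> 0^'+] --> l) /\
  (forall x, D x -> h^-1 *: (S h x - x) @[h --> 0^'+] --> L x).

End Defs.

(* Main.v *)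
Require Import Defs.
From HB Require Import structures.
From mathcomp Require Import all_boot all_order all_algebra.
From mathcomp Require Import all_classical all_reals all_analysis.
From mathcomp Require Import ring lra ssrAC.
Import Order.TTheory GRing.Theory Num.Theory.
Import numFieldNormedType.Exports.
Local Open Scope classical_set_scope.
Local Open Scope ring_scope.
Lemma grp1 (V : zmodType) (a b z p q r : V) :
  a - z - (p + q) = (b - z - p) + (a - b - r) + (r - q).
Proof.
rewrite !addrA subrK opprD !addrA; congr (_ - q).
rewrite [RHS]addrAC [b - z - p - b]addrAC [b - z - b]addrAC subrr add0r addrC addrA.
by rewrite [LHS]addrC addrA.
Qed.

Section S.
Context {R : realType} {X : normedModType R}.
Implicit Types (f : X -> X).

Lemma lin0 {f} : lin_op f -> f 0 = 0.
Proof.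
move=> lf; have := lf (-1) 0 0; rewrite scaler0 addr0 scaleN1r addNr; exact.
Qed.
Lemma linD {f} (lf : lin_op f) x y : f (x + y) = f x + f y.
Proof. by have := lf 1 x y; rewrite !scale1r. Qed.
Lemma linZ {f} (lf : lin_op f) a x : f (a *: x) = a *: f x.
Proof. by have := lf a x 0; rewrite (lin0 lf) !addr0. Qed.
Lemma linN {f} (lf : lin_op f) x : f (- x) = - f x.
Proof. by rewrite -scaleN1r (linZ lf) scaleN1r. Qed.
Lemma linB {f} (lf : lin_op f) x y : f (x - y) = f x - f y.
Proof. by rewrite (linD lf) (linN lf). Qed.

Lemma lin_comp f g : lin_op f -> lin_op g -> lin_op (fun x => f (g x)).
Proof. by move=> lf lg a x y; rewrite lg lf. Qed.

Lemma opn_abs {f c} : op_norm_le f c -> op_norm_le f `|c|.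
Proof. move=> h x; apply: (le_trans (h x)); apply: ler_wpM2r => //; exact: ler_norm. Qed.

Lemma eqle {x y : R} : x = y -> x <= y.
Proof. by move->. Qed.

Lemma small_le (a b c : R) : 0 <= c -> (forall e, 0 < e -> a <= b + e * c) -> a <= b.
Proof.
move=> c0 H; apply/ler_addgt0Pr => e e0.
apply: (le_trans (H (e / (c + 1)) _)); first by rewrite divr_gt0 // ltr_wpDl.
rewrite lerD2l mulrAC ler_pdivrMr ?ltr_wpDl // ler_pM2l // lerDl //.
Qed.

Lemma small_eq0 (v : X) : (forall e, 0 < e -> `|v| <= e) -> v = 0.
Proof.
move=> H; apply/normr0_eq0/le_anti; rewrite normr_ge0 andbT.
apply: (@small_le _ 0 1) => // e e0; rewrite add0r mulr1; exact: H.
Qed.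

Lemma cvg_eps {f : R -> X} {l : X} : f h @[h --> 0^'+] --> l ->
  forall e, 0 < e -> exists2 d, 0 < d & forall h, 0 < h -> h < d -> `|f h - l| <= e.
Proof.
move=> /cvgrPdist_le H e e0; have := H e e0.
rewrite near_withinE => /nbhs_ballP [d d0 Hd]; exists d => // h h0 hd.
rewrite distrC; apply: Hd => //; rewrite -ball_normE /= sub0r normrN gtr0_norm //.
Qed.

Lemma eps_cvg (f : R -> X) (l : X) :
  (forall e, 0 < e -> exists2 d, 0 < d & forall h, 0 < h -> h < d -> `|f h - l| <= e) ->
  f h @[h --> 0^'+] --> l.
Proof.
move=> H; apply/cvgrPdist_le => e e0; have [d d0 Hd] := H e e0.
near=> h; rewrite distrC; apply: Hd.
  by near: h; exact: nbhs_right_gt.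
by near: h; exact: nbhs_right_lt.
Unshelve. all: by end_near. Qed.

Lemma lim_uniq (f : R -> X) (l1 l2 : X) : f h @[h --> 0^'+] --> l1 ->
  f h @[h --> 0^'+] --> l2 -> l1 = l2.
Proof.
move=> /cvg_eps H1 /cvg_eps H2; apply/eqP; rewrite -subr_eq0; apply/eqP.
apply: small_eq0 => e e0.
have e2: 0 < e / 2 by rewrite divr_gt0.
have [d1 d10 Hd1] := H1 _ e2; have [d2 d20 Hd2] := H2 _ e2.
set h := Order.min d1 d2 / 2.
have hm : 0 < Order.min d1 d2 by rewrite lt_min d10 d20.
have h0 : 0 < h by rewrite divr_gt0.
have hlt : h < Order.min d1 d2 by rewrite /h ltr_pdivrMr // ltr_pMr // ltr1n.
move: hlt; rewrite lt_min => /andP[hl1 hl2].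
have a := Hd1 h h0 hl1; have b := Hd2 h h0 hl2. have -> : l1 - l2 = (f h - l2) - (f h - l1) by rewrite opprB [RHS]addrC addrA subrK.
apply: (le_trans (ler_normB _ _)); rewrite (splitr e); exact: lerD.
Qed.

Lemma deriv_est {U : R -> X -> X} {D : set X} {G : X -> X} {z} :
  generator U D G -> D z ->
  forall e, 0 < e -> exists2 d, 0 < d & forall h, 0 < h -> h < d ->
    `|U h z - z - h *: G z| <= e * h.
Proof.
move=> [_ HG] Dz e e0; have [d d0 Hd] := cvg_eps (HG z Dz) e e0.
exists d => // h h0 hd; have := Hd h h0 hd.
have -> : U h z - z - h *: G z = h *: (h^-1 *: (U h z - z) - G z).
  by rewrite scalerBr scalerA mulfV ?gt_eqF // scale1r.
by rewrite normrZ gtr0_norm // [e * h]mulrC ler_pM2l.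
Qed.

Lemma tele (U : R -> X -> X) (B : X -> X) (K' g_ tau : R) (z g : X) :
  lin_op B ->
  (forall r, 0 <= r -> lin_op (U r)) ->
  (forall x, U 0 x = x) ->
  (forall s r x, 0 <= s -> 0 <= r -> U (s + r) x = U s (U r x)) ->
  0 <= tau -> 0 <= K' ->
  (forall r v, 0 <= r -> r <= tau -> `|B (U r v)| <= K' * `|v|) ->
  (forall r, 0 <= r -> r <= tau -> `|B (U r g - g)| <= g_) ->
  (forall e, 0 < e -> exists2 d, 0 < d & forall h, 0 < h -> h < d ->
     `|U h z - z - h *: g| <= e * h) ->
  `|B (U tau z - z - tau *: g)| <= tau * g_.
Proof.
move=> lB lU U0 Uadd tau0 K0 HB Hg Hd.
have g0 : 0 <= g_ by apply: le_trans (Hg 0 (lexx _) tau0); exact: normr_ge0.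
have [->|taup] := eqVneq tau 0.
  by rewrite U0 subrr scale0r subr0 (lin0 lB) normr0 mul0r.
have taup' : 0 < tau by rewrite lt_def taup tau0.
apply: (@small_le _ _ (K' * tau)); first exact: mulr_ge0.
move=> e e0; have [d d0 Hdd] := Hd e e0.
set m := (Num.truncn (tau / d)).+1.
have m0 : (0 < m%:R :> R) by rewrite ltr0n.
set h := tau / m%:R.
have h0 : 0 < h by rewrite divr_gt0.
have hd : h < d.
  rewrite /h ltr_pdivrMr // mulrC -ltr_pdivrMr //; exact: truncnS_gt.
have hm : h * m%:R = tau by rewrite /h mulfVK // gt_eqF.
have key : forall j : nat, (j <= m)%N ->
  `|B (U (j%:R * h) z - z - (j%:R * h) *: g)| <= j%:R * (K' * (e * h) + h * g_).
  elim=> [|j IH] jm.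
    by rewrite mul0r U0 subrr scale0r subr0 (lin0 lB) normr0 mul0r.
  have jm' : (j <= m)%N by apply: ltnW.
  have jh0 : 0 <= j%:R * h by rewrite mulr_ge0 // ltW.
  have jht : j%:R * h <= tau.
    by rewrite -hm [h * _]mulrC ler_pM2r // ler_nat.
  have -> : j.+1%:R * h = j%:R * h + h by rewrite -addn1 natrD mulrDl mul1r.
  have E : U (j%:R * h + h) z - z - (j%:R * h + h) *: g =
     (U (j%:R * h) z - z - (j%:R * h) *: g) +
     U (j%:R * h) (U h z - z - h *: g) + h *: (U (j%:R * h) g - g).
    rewrite Uadd // ?ltW // !(linB (lU _ jh0)) (linZ (lU _ jh0)) scalerDl scalerBr.
    exact: grp1.
  rewrite E (linD lB) (linD lB) (linZ lB).
  apply: (le_trans (ler_normD _ _)).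
  apply: (le_trans (lerD (ler_normD _ _) (lexx _))).
  rewrite normrZ gtr0_norm //.
  have t1 := IH jm'.
  have t2 : `|B (U (j%:R * h) (U h z - z - h *: g))| <= K' * (e * h).
    apply: (le_trans (HB _ _ jh0 jht)); apply: ler_wpM2l => //; exact: Hdd.
  have t3 : h * `|B (U (j%:R * h) g - g)| <= h * g_.
    by apply: ler_wpM2l; [exact: ltW|exact: Hg].
  rewrite -addn1 natrD mulrDl mul1r -addrA.
  by apply: lerD => //; exact: lerD.
have := key m (leqnn _); rewrite [m%:R * h]mulrC hm => H.
apply: (le_trans H); rewrite -hm le_eqVlt; apply/orP; left; apply/eqP; ring.
Qed.
End S.

Lemma iter_bound {R : realType} {X : normedModType R} (f : X -> X) (K : R) m x :
  0 <= K -> op_norm_le f K -> `|iter m f x| <= K ^+ m * `|x|.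
Proof.
move=> K0 Hf; elim: m => [|m IH]; first by rewrite expr0 mul1r.
rewrite iterS exprS -mulrA; apply: (le_trans (Hf _)); exact: ler_wpM2l.
Qed.

Lemma sg_iter {R : realType} {X : normedModType R} {T : R -> X -> X} m s x :
  C0_semigroup T -> 0 <= s -> T (m%:R * s) x = iter m (T s) x.
Proof.
move=> [_ T0 Tadd _] s0; elim: m => [|m IH]; first by rewrite mul0r T0.
rewrite iterS -IH -addn1 natrD mulrDl mul1r addrC Tadd // mulr_ge0 //.
Qed.

Lemma local_bound0 {R : realType} {X : completeNormedModType R} {T : R -> X -> X} :
  C0_semigroup T -> exists eps, 0 < eps /\ exists K0, 1 <= K0 /\
    forall r, 0 <= r -> r <= eps -> op_norm_le (T r) K0.
Proof.
move=> HT; have [Tb T0 Tadd Tc] := HT.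
apply: contrapT => H.
have Hn : forall n : nat, exists rx : R * X, (0 <= rx.1 /\ rx.1 <= n.+1%:R^-1) /\
    n.+1%:R * `|rx.2| < `|T rx.1 rx.2|.
  move=> n; apply: contrapT => Hn; apply: H; exists n.+1%:R^-1.
  split; first by rewrite invr_gt0 ltr0n.
  exists n.+1%:R; split; first by rewrite ler1n.
  move=> r r0 rn x; rewrite leNgt; apply/negP => Hlt; apply: Hn.
  by exists (r, x).
have [f Hf] := choice Hn.
set F := [set g : X -> X | exists n, g = T (f n).1].
have FP : forall g, F g -> bounded_fun_norm g /\ linear g.
  move=> g [n ->]; have [[r0 _] _] := Hf n; have [lin [c Hc]] := Tb _ r0.
  split => //; move=> r; exists (`|c| * r) => x xr.
  apply: (le_trans (opn_abs Hc x)); exact: ler_wpM2l.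
have PB : pointwise_bounded F.
  move=> x; have [d d0 Hd] := cvg_eps (Tc x) 1 ltr01.
  set N := Num.truncn d^-1.
  have small : forall n, (N <= n)%N -> `|T (f n).1 x| <= `|x| + 1.
    move=> n Nn; have [[r0 rn] _] := Hf n.
    have [->|rnz] := eqVneq (f n).1 0; first by rewrite T0 lerDl.
    have rp : 0 < (f n).1 by rewrite lt_def rnz r0.
    have rd : (f n).1 < d.
      apply: (le_lt_trans rn); rewrite invf_plt ?posrE ?ltr0n //.
      apply: (lt_le_trans (truncnS_gt _)); by rewrite ler_nat.
    have := Hd _ rp rd => H1.
    have -> : T (f n).1 x = (T (f n).1 x - x) + x by rewrite subrK.
    by apply: (le_trans (ler_normD _ _)); rewrite addrC lerD2l.
  have big : forall N', exists M, 0 <= M /\ forall n, (n < N')%N -> `|T (f n).1 x| <= M.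
    elim=> [|N' [M [M0 HM]]]; first by exists 0; split => // n.
    have [[r0 _] _] := Hf N'; have [_ [c Hc]] := Tb _ r0.
    exists (M + `|c| * `|x|); split; first by rewrite addr_ge0 // mulr_ge0.
    move=> n; rewrite ltnS leq_eqVlt => /orP [/eqP ->|nN].
      by apply: (le_trans (opn_abs Hc x)); rewrite lerDr.
    by apply: (le_trans (HM _ nN)); rewrite lerDl mulr_ge0.
  have [M [M0 HM]] := big N.
  exists (M + (`|x| + 1)) => g [n ->].
  have [nN|Nn] := ltnP n N.
    by apply: (le_trans (HM _ nN)); rewrite lerDl addr_ge0.
  by apply: (le_trans (small _ Nn)); rewrite lerDr.
have [M HM] := Banach_Steinhauss FP PB 1.
set n := Num.truncn M.
have [[r0 _] Hlt] := Hf n.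
set r := (f n).1 in Hlt r0 *; set x := (f n).2 in Hlt *.
have [lin _] := Tb _ r0.
have x0 : x != 0.
  apply/negP => /eqP x0; move: Hlt; rewrite x0 (lin0 lin) normr0 mulr0 ltxx //.
have nx : 0 < `|x| by rewrite normr_gt0.
have := HM (T r) (ex_intro _ n erefl) (`|x|^-1 *: x).
rewrite normrZ normfV normr_id mulVf ?gt_eqF // lexx => /(_ isT).
rewrite (linZ lin) normrZ normfV normr_id => H2.
have : n.+1%:R < `|x|^-1 * `|T r x|.
  by rewrite mulrC ltr_pdivlMr // mulrC.
have : M < n.+1%:R by exact: truncnS_gt.
move=> a b; have := lt_trans a b; rewrite ltNge H2 //.
Qed.

Lemma local_bound {R : realType} {X : completeNormedModType R} {T : R -> X -> X} :
  C0_semigroup T -> forall t, 0 <= t -> exists K, 1 <= K /\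
    forall r, 0 <= r -> r <= t -> op_norm_le (T r) K.
Proof.
move=> HT t t0; have [eps [eps0 [K0 [K01 HK0]]]] := local_bound0 HT.
set m := (Num.truncn (t / eps)).+1.
have m0 : (0 < m%:R :> R) by rewrite ltr0n.
exists (K0 ^+ m); split; first exact: exprn_ege1.
move=> r r0 rt x.
have -> : r = m%:R * (r / m%:R) by rewrite mulrC divfK // gt_eqF.
have rm0 : 0 <= r / m%:R by rewrite divr_ge0 // ltW.
rewrite sg_iter //; apply: iter_bound; first exact: le_trans K01.
apply: HK0 => //; rewrite ler_pdivrMr //; apply: (le_trans rt).
rewrite mulrC -ler_pdivrMr //; exact: ltW (truncnS_gt _).
Qed.

Section Sg.
Context {R : realType} {X : normedModType R}.

Lemma bnd_abs {A : X -> X} : bounded_op A -> exists c, 0 <= c /\ op_norm_le A c.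
Proof. by move=> [_ [c Hc]]; exists `|c|; split => //; exact: opn_abs. Qed.

Lemma comm_gen {U : R -> X -> X} {D' : set X} {G' : X -> X} {s y} :
  C0_semigroup U -> generator U D' G' -> 0 <= s -> D' y ->
  D' (U s y) /\ G' (U s y) = U s (G' y).
Proof.
move=> [Ub U0 Uadd _] [g1 g2] s0 Dy.
have [lin _] := Ub s s0; have [c [c0 Hc]] := bnd_abs (Ub s s0).
have L1 : (fun h => h^-1 *: (U h (U s y) - U s y)) h @[h --> 0^'+] --> U s (G' y).
  apply: eps_cvg => e e0.
  have e'0 : 0 < e / (c + 1) by rewrite divr_gt0 // ltr_wpDl.
  have [d d0 Hd] := cvg_eps (g2 y Dy) _ e'0.
  exists d => // h h0 hd.
  have -> : h^-1 *: (U h (U s y) - U s y) - U s (G' y) =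
      U s (h^-1 *: (U h y - y) - G' y).
    have E : U h (U s y) = U s (U h y).
      by rewrite -Uadd ?s0 ?(ltW h0) // -Uadd ?s0 ?(ltW h0) // addrC.
    by rewrite (linB lin) (linZ lin) (linB lin) E.
  apply: (le_trans (Hc _)); apply: (le_trans (ler_wpM2l c0 (Hd _ h0 hd))).
  rewrite mulrA ler_pdivrMr ?ltr_wpDl // [c * e]mulrC ler_pM2l // lerDl //.
have D's : D' (U s y) by apply/g1; exists (U s (G' y)).
split => //; exact: lim_uniq (g2 _ D's) L1.
Qed.

End Sg.

Section Est.
Context {R : realType} {X : normedModType R}.

Lemma lin_id : lin_op (fun v : X => v).
Proof. by []. Qed.

Lemma linQ (P : X -> X) : lin_op P -> lin_op (fun v => v - P v).
Proof. by move=> lP a x y; rewrite lP scalerBr opprD addrACA. Qed.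

Lemma first_order {U : R -> X -> X} {D' : set X} {G' : X -> X} {K t : R} {w} :
  C0_semigroup U -> generator U D' G' -> 1 <= K ->
  (forall r, 0 <= r -> r <= t -> op_norm_le (U r) K) -> D' w ->
  forall r, 0 <= r -> r <= t -> `|U r w - w| <= r * ((K + 2) * `|G' w|).
Proof.
move=> HU gU K1 HK Dw r r0 rt.
have HU' := HU; have [Ub U0 Uadd _] := HU'.
have K0 : 0 <= K by apply: le_trans K1.
have H : `|U r w - w - r *: G' w| <= r * ((K + 1) * `|G' w|).
  apply: (@tele R X U (fun v => v) K ((K + 1) * `|G' w|) r w (G' w) lin_id
    (fun r' r0' => (Ub r' r0').1) U0 Uadd r0 K0).
  - by move=> r' v r'0 r'r; apply: HK => //; apply: le_trans rt.
  - move=> r' r'0 r'r; apply: (le_trans (ler_normB _ _)).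
    rewrite mulrDl mul1r lerD2r; apply: HK => //; exact: le_trans rt.
  - exact: (deriv_est gU Dw).
have -> : U r w - w = (U r w - w - r *: G' w) + r *: G' w by rewrite subrK.
apply: (le_trans (ler_normD _ _)); rewrite normrZ ger0_norm //.
have -> : r * ((K + 2) * `|G' w|) = r * ((K + 1) * `|G' w|) + r * `|G' w|.
  by ring.
exact: lerD.
Qed.

Lemma second_order {U : R -> X -> X} {D' : set X} {G' : X -> X} {K t : R} {z} :
  C0_semigroup U -> generator U D' G' -> 1 <= K ->
  (forall r, 0 <= r -> r <= t -> op_norm_le (U r) K) -> D' z -> D' (G' z) ->
  forall tau, 0 <= tau -> tau <= t ->
  `|U tau z - z - tau *: G' z| <= tau * (tau * ((K + 2) * `|G' (G' z)|)).
Proof.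
move=> HU gU K1 HK Dz DGz tau tau0 taut.
have HU' := HU; have [Ub U0 Uadd _] := HU'.
have K0 : 0 <= K by apply: le_trans K1.
apply: (@tele R X U (fun v => v) K (tau * ((K + 2) * `|G' (G' z)|)) tau z (G' z) lin_id
  (fun r' r0' => (Ub r' r0').1) U0 Uadd tau0 K0).
- by move=> r' v r'0 r'r; apply: HK => //; apply: le_trans taut.
- move=> r' r'0 r'r /=; apply: (le_trans (first_order HU gU K1 HK DGz r' r'0 _)).
    exact: le_trans taut.
  apply: ler_wpM2r => //; apply: mulr_ge0 => //; apply: addr_ge0 => //.
- exact: (deriv_est gU Dz).
Qed.

End Est.

Lemma grp2 (V : zmodType) (a pa z u v : V) :
  u - v = (a - pa) - ((a - z - u) - (pa - z - v)).
Proof.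
rewrite opprB !opprD !opprK !addrA.
rewrite (ACl (1*6*2*3*4*7*5*8)%AC) /=.
by rewrite !(subrr, addNr, add0r, addr0) addrC.
Qed.

Section Est2.
Context {R : realType} {X : normedModType R}.

Lemma QL_bound (S : R -> X -> X) (D : set X) (L P : X -> X) (b cp : R) z :
  generator S D L -> lin_op P -> 0 <= cp -> op_norm_le P cp ->
  (forall t : R, 0 <= t ->
     op_norm_le (fun y => S t (P y) - P (S t (P y))) (t * b)) ->
  P z = z -> D z -> `|L z - P (L z)| <= b * `|z|.
Proof.
move=> gS lP cp0 HP H2 Pz Dz.
apply: (@small_le _ _ _ (1 + cp)); first by rewrite addr_ge0.
move=> e e0; have [d d0 Hd] := deriv_est gS Dz e e0.
set h := d / 2.
have h0 : 0 < h by rewrite divr_gt0.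
have hd : h < d by rewrite /h ltr_pdivrMr // ltr_pMr // ltr1n.
have H1 := Hd h h0 hd.
have H3 := H2 h (ltW h0) z; rewrite /= Pz in H3.
set w := S h z - z - h *: L z.
have E : h *: (L z - P (L z)) = (S h z - P (S h z)) - (w - P w).
  rewrite /w (linB lP) (linB lP) (linZ lP) Pz scalerBr; exact: grp2.
have : h * `|L z - P (L z)| <= h * b * `|z| + (1 + cp) * (e * h).
  have -> : h * `|L z - P (L z)| = `|h *: (L z - P (L z))|.
    by rewrite normrZ gtr0_norm.
  rewrite E.
  apply: (le_trans (ler_normB _ _)); apply: lerD => //.
  apply: (le_trans (ler_normB _ _)); rewrite mulrDl mul1r.
  apply: lerD => //; apply: (le_trans (HP w)); exact: ler_wpM2l.
move=> H; rewrite -(ler_pM2l h0); apply: (le_trans H).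
rewrite mulrDr mulrA; apply: lerD => //; apply: eqle; ring.
Qed.

End Est2.

Lemma grp3 (V : zmodType) (a y u pa py : V) :
  (a - y - u) - (pa - py - u) = (a - pa) - (y - py).
Proof.
rewrite !opprB ?opprD ?opprK !addrA subrK.
by rewrite [LHS](ACl (1*4*3*2)%AC).
Qed.

Section Est3.
Context {R : realType} {X : normedModType R}.

Lemma SP_second (S : R -> X -> X) (D : set X) (L P : X -> X) (b cp : R) z tau :
  C0_contraction_semigroup S -> generator S D L -> lin_op P -> 0 <= cp ->
  op_norm_le P cp -> 0 <= b ->
  (forall y, P (P y) = P y) ->
  (forall t : R, 0 <= t ->
     op_norm_le (fun y => P (S t (y - P y))) (t * b)) ->
  D z -> D (P (L z)) -> 0 <= tau ->
  `|P (S tau z - z - tau *: L z)| <=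
    tau * (tau * (b * `|L z| + cp * ((1 + 2) * `|L (P (L z))|))).
Proof.
move=> [HS Sc] gS lP cp0 HP b0 PP H1 Dz DPL tau0.
have HS' := HS; have [Sb S0 Sadd _] := HS'.
have HK : forall r, 0 <= r -> r <= tau -> op_norm_le (S r) 1 by move=> r r0 _; exact: Sc.
apply: (@tele R X S P cp _ tau z (L z) lP (fun r' r0' => (Sb r' r0').1) S0 Sadd tau0 cp0).
- move=> r v r0 _; apply: (le_trans (HP _)); apply: ler_wpM2l => //.
  by have := Sc r r0 v; rewrite mul1r.
- move=> r r0 rt; have [lS _] := Sb r r0.
  have -> : P (S r (L z) - L z) =
      P (S r (L z - P (L z))) + P (S r (P (L z)) - P (L z)).
    by rewrite !(linB lP) (linB lS) !(linB lP) PP addrA subrK.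
  apply: (le_trans (ler_normD _ _)).
  have Hf := first_order HS gS (lexx 1) HK DPL r r0 rt.
  rewrite mulrDr; apply: lerD.
    apply: (le_trans (H1 r r0 (L z))); rewrite -mulrA; apply: ler_wpM2r => //; exact: mulr_ge0.
  apply: (le_trans (HP _)); rewrite mulrCA; apply: ler_wpM2l => //.
  apply: (le_trans Hf); apply: ler_wpM2r => //; apply: mulr_ge0 => //.
- exact: (deriv_est gS Dz).
Qed.

End Est3.

Lemma QT_inv {R : realType} {X : completeNormedModType R} (T : R -> X -> X)
  (D : set X) (L P : X -> X) (cp : R) s y :
  C0_semigroup T -> generator T (fun y => D (P y)) (fun y => P (L (P y))) ->
  lin_op P -> 0 <= cp -> op_norm_le P cp -> (forall y, P (P y) = P y) ->
  0 <= s -> D (P y) -> T s y - P (T s y) = y - P y.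
Proof.
move=> HT gT lP cp0 HP PP s0 Dy.
have HT' := HT; have [Tb T0 Tadd _] := HT'.
have [K [K1 HK]] := local_bound HT s s0.
have K0 : 0 <= K by apply: le_trans K1.
set G := fun y => P (L (P y)).
have lQ := linQ P lP.
have H := @tele R X T (fun v => v - P v) ((1 + cp) * K) 0 s y (G y) lQ
  (fun r' r0' => (Tb r' r0').1) T0 Tadd s0 (mulr_ge0 (addr_ge0 ler01 cp0) K0).
have H' : `|(T s y - y - s *: G y) - P (T s y - y - s *: G y)| <= s * 0.
  apply: H.
  - move=> r v r0 rs /=; apply: (le_trans (ler_normB _ _)).
    rewrite mulrDl mul1r mulrDl; apply: lerD; first exact: HK.
    apply: (le_trans (HP _)); rewrite -mulrA; apply: ler_wpM2l => //; exact: HK.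
  - move=> r r0 rs; have [_ E] := comm_gen HT gT r0 Dy.
    rewrite /= in E; rewrite /G /= -E (linB lP) !PP subrr normr0 //.
  - exact: (deriv_est gT Dy).
move: H'; rewrite mulr0 normr_le0 => /eqP.
rewrite !(linB lP) (linZ lP) /G PP grp3 => /eqP; rewrite subr_eq0 => /eqP //.
Qed.

Lemma pow_nbound {R : realType} (d : R) (n : nat) : 0 <= d -> d <= 1 ->
  n%:R * d ^+ n * (1 - d) <= 1 - d ^+ n.
Proof.
move=> d0 d1; elim: n => [|n IH]; first by rewrite mul0r mul0r expr0 subrr.
have e0 : 0 <= d ^+ n by exact: exprn_ge0.
have e1 : d ^+ n <= 1 by exact: exprn_ile1.
rewrite exprS -addn1 natrD.
have : d * (n%:R * d ^+ n * (1 - d)) <= d * (1 - d ^+ n) by exact: ler_wpM2l.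
have h2 : 0 <= (1 - d) * (1 - d * d ^+ n).
  apply: mulr_ge0; rewrite subr_ge0 //; rewrite -[1]mulr1; exact: ler_pM.
move=> H; nra.
Qed.

Lemma pow_le_inv {R : realType} (d : R) (n : nat) : 0 <= d -> d < 1 -> (0 < n)%N ->
  d ^+ n <= (1 - d)^-1 / n%:R.
Proof.
move=> d0 d1 n0; have := pow_nbound d n d0 (ltW d1).
have e0 : 0 <= d ^+ n by exact: exprn_ge0.
have n0' : (0 < n%:R :> R) by rewrite ltr0n.
have d1' : 0 < 1 - d by rewrite subr_gt0.
move=> H; rewrite ler_pdivlMr // -(ler_pM2r d1') mulVf ?gt_eqF //; nra.
Qed.

Lemma geo_zero {R : realType} (d a C : R) : 0 <= d -> d < 1 -> 0 <= C ->
  (forall n, (0 < n)%N -> a <= C * d ^+ n) -> a <= 0.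
Proof.
move=> d0 d1 C0 H; rewrite leNgt; apply/negP => a0.
have d1' : 0 < 1 - d by rewrite subr_gt0.
set u := (1 - d)^-1.
have u0 : 0 < u by rewrite invr_gt0.
set n := (Num.truncn (C * u / a)).+1.
have n0 : (0 < n%:R :> R) by rewrite ltr0n.
have Hn := H n isT.
have Hp := pow_le_inv d n d0 d1 (isT : (0 < n)%N).
have : C * d ^+ n <= C * (u / n%:R) by exact: ler_wpM2l.
have : C * u / a < n%:R by exact: truncnS_gt.
rewrite ltr_pdivrMr // => h1 h2.
have : C * (u / n%:R) < a.
  by rewrite mulrA ltr_pdivrMr // [a * _]mulrC.
move=> h3; have := le_lt_trans (le_trans Hn h2) h3; rewrite ltxx //.
Qed.

Lemma M_P {R : realType} {X : normedModType R} (M P : X -> X) (d : R) :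
  lin_op M -> op_norm_le M 1 -> lin_op P -> 0 <= d -> d < 1 ->
  (forall n : nat, (0 < n)%N -> op_norm_le (fun y => iter n M y - P y) (d ^+ n)) ->
  (forall y, M (P y) = P y) /\ (forall y, P (M y) = P y).
Proof.
move=> lM HM lP d0 d1 H.
have dn : forall n : nat, d ^+ n.+1 <= d ^+ n.
  by move=> n; rewrite exprS ler_piMl // ?exprn_ge0 // ltW.
split => y; apply/eqP; rewrite -subr_eq0 -normr_le0.
- apply: (@geo_zero _ d _ (2 * `|y|)) => //.
  move=> n n0.
  have -> : M (P y) - P y = M (P y - iter n M y) + (iter n.+1 M y - P y).
    by rewrite (linB lM) iterS addrA subrK.
  apply: (le_trans (ler_normD _ _)).
  have h1 : `|M (P y - iter n M y)| <= d ^+ n * `|y|.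
    apply: (le_trans (HM _)); rewrite mul1r -opprB normrN; exact: H.
  have h2 : `|iter n.+1 M y - P y| <= d ^+ n * `|y|.
    apply: (le_trans (H n.+1 isT y)); apply: ler_wpM2r => //.
  have -> : 2 * `|y| * d ^+ n = d ^+ n * `|y| + d ^+ n * `|y| by ring.
  exact: lerD.
- apply: (@geo_zero _ d _ (2 * `|y|)) => //.
  move=> n n0.
  have -> : P (M y) - P y = (P (M y) - iter n M (M y)) + (iter n.+1 M y - P y).
    by rewrite iterSr addrA subrK.
  apply: (le_trans (ler_normD _ _)).
  have h1 : `|P (M y) - iter n M (M y)| <= d ^+ n * `|y|.
    rewrite -opprB normrN; apply: (le_trans (H _ n0 _)); apply: ler_wpM2l.
      exact: exprn_ge0.
    by have := HM y; rewrite mul1r.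
  have h2 : `|iter n.+1 M y - P y| <= d ^+ n * `|y|.
    apply: (le_trans (H n.+1 isT y)); apply: ler_wpM2r => //.
  have -> : 2 * `|y| * d ^+ n = d ^+ n * `|y| + d ^+ n * `|y| by ring.
  exact: lerD.
Qed.

Lemma grp4 (V : zmodType) (a b z v : V) : (a - z - v) - (b - z - v) = a - b.
Proof. by rewrite !opprB ?opprD ?opprK !addrA subrK subrK. Qed.
Lemma grp5 (V : zmodType) (Aa pc nc pz nz z1 : V) :
  Aa + (pc + nc) + (pz + nz) - z1 = (Aa + pc + (pz - z1)) + (nc + nz).
Proof. by rewrite !addrA [LHS](ACl (1*2*4*6*3*5)%AC). Qed.
Theorem theorem5p1 (R : realType) (X : completeNormedModType R)
  (S : R -> X -> X) (D : set X) (L : X -> X)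
  (M P : X -> X) (delta b : R) (T : R -> X -> X) :
  C0_contraction_semigroup S ->
  generator S D L ->
  contraction_op M ->
  projection_op P ->
  0 < delta -> delta < 1 ->
  (forall n : nat, (0 < n)%N ->
     op_norm_le (fun y => iter n M y - P y) (delta ^+ n)) ->
  0 <= b ->
  (forall t : R, 0 <= t ->
     op_norm_le (fun y => P (S t (y - P y))) (t * b)) ->
  (forall t : R, 0 <= t ->
     op_norm_le (fun y => S t (P y) - P (S t (P y))) (t * b)) ->
  (* (PLP, D(LP)) generates the C0-semigroup T = e^{t PLP} *)
  C0_semigroup T ->
  generator T (fun y => D (P y)) (fun y => P (L (P y))) ->
  forall t : R, 0 <= t ->
  exists c : R, 0 < c /\
  forall (n : nat) (x : X), (0 < n)%N ->
    D (P x) -> D (P (L (P x))) ->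
    `| iter n (fun y => M (S (t / n%:R) y)) x - T t (P x) |
      <= c / n%:R * (`|x| + `|L (P x)| + `|L (P (L (P x)))|) + delta ^+ n * `|x|.
Proof.
move=> HS gS [lM HMc] [[lP [cP0 HP0]] PP] d0 d1 Hpow b0 H1 H2 HT gT t t0.
set cp := `|cP0|.
have HP : op_norm_le P cp := opn_abs HP0.
have cp0 : 0 <= cp := normr_ge0 _.
have [HSs Sc] := HS; have [Sb S0 Sadd _] := HSs.
have [Tb T0 Tadd _] := HT.
have [K [K1 HK]] := local_bound HT t t0.
have K0 : 0 <= K := le_trans ler01 K1.
have [MP PM] := M_P M P delta lM HMc lP (ltW d0) d1 Hpow.
have d1' : 0 < 1 - delta by rewrite subr_gt0.
have d1n : 1 - delta != 0 by rewrite gt_eqF.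
set u := (1 - delta)^-1.
have u0 : 0 <= u by rewrite invr_ge0 ltW.
have dl0 : 0 <= delta := ltW d0.
set Kc := K * cp.
have Kc0 : 0 <= Kc by rewrite mulr_ge0.
set E2 := b * (1 + b) + cp * ((1 + 2) * (1 + b)) + (K + 2).
have E20 : 0 <= E2.
  by rewrite !addr_ge0 // ?mulr_ge0 // ?addr_ge0.
set c0 := t * t * E2 * Kc + t * t * delta * b * b * Kc * u + t * b * (1 + cp) * u
  + (1 + cp) * u + delta * t * b * Kc * u.
have c00 : 0 <= c0.
  by rewrite !addr_ge0 // ?mulr_ge0 // ?addr_ge0.
exists (c0 + 1); split; first by rewrite ltr_pwDr.
move=> n x n0 DPx DPLPx.
set N0 := `|x| + `|L (P x)| + `|L (P (L (P x)))|.
have nx0 := normr_ge0 x; have nl0 := normr_ge0 (L (P x));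
have nll0 := normr_ge0 (L (P (L (P x)))).
have Nx : `|x| <= N0 by rewrite /N0; lra.
have NLx : `|L (P x)| <= N0 by rewrite /N0; lra.
have NLLx : `|L (P (L (P x)))| <= N0 by rewrite /N0; lra.
have N00 : 0 <= N0 by rewrite /N0; lra.
set tau := t / n%:R.
have nR : 0 < n%:R :> R by rewrite ltr0n.
have tau0 : 0 <= tau by rewrite divr_ge0 // ltW.
have taut : tau <= t.
  by rewrite /tau ler_pdivrMr // ler_peMr // ler1n.
have ktau : forall k, (k <= n)%N -> 0 <= k%:R * tau /\ k%:R * tau <= t.
  move=> k kn; split; first by rewrite mulr_ge0.
  rewrite /tau mulrA ler_pdivrMr // mulrC ler_wpM2l // ler_nat //.
set z := fun k : nat => T (k%:R * tau) (P x).
set W := Kc * N0.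
have W0 : 0 <= W by rewrite mulr_ge0.
have DPPx : D (P (P x)) by rewrite PP.
have DPLPx' : D (P (P (L (P x)))) by rewrite PP.
have Fk : forall k, (k <= n)%N -> P (z k) = z k /\ D (z k) /\ D (P (L (z k))) /\
    `|z k| <= W /\ `|P (L (z k))| <= W /\ `|P (L (P (L (z k))))| <= W.
  move=> k kn; have [s0 st] := ktau k kn.
  have F1 : P (z k) = z k.
    have := QT_inv T D L P cp (k%:R * tau) (P x) HT gT lP cp0 HP PP s0 DPPx.
    rewrite PP subrr => /eqP; rewrite subr_eq0 => /eqP //.
  have [C1 C2] := comm_gen HT gT s0 DPPx.
  rewrite /= -/(z k) F1 in C1; rewrite /= -/(z k) F1 PP in C2.
  have [C3 C4] := comm_gen HT gT s0 DPLPx'.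
  rewrite /= -C2 PP in C3; rewrite /= -C2 PP in C4.
  have HKs := HK _ s0 st.
  do !split => //.
  - apply: (le_trans (HKs _)); rewrite /W /Kc -mulrA; apply: ler_wpM2l => //.
    apply: (le_trans (HP _)); exact: ler_wpM2l.
  - rewrite C2; apply: (le_trans (HKs _)); rewrite /W /Kc -mulrA; apply: ler_wpM2l => //.
    apply: (le_trans (HP _)); exact: ler_wpM2l.
  - rewrite C4; apply: (le_trans (HKs _)); rewrite /W /Kc -mulrA; apply: ler_wpM2l => //.
    rewrite PP; apply: (le_trans (HP _)); exact: ler_wpM2l.
have zS : forall k, z k.+1 = T tau (z k).
  move=> k; rewrite /z -addn1 natrD mulrDl mul1r addrC Tadd //.
  by rewrite mulr_ge0.
have LE : forall k, (k < n)%N ->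
    `|P (S tau (z k)) - z k.+1| <= tau * (tau * (E2 * W)).
  move=> k kn; have [F1 [Dz [DPLz [nz [nPL nPLPL]]]]] := Fk k (ltnW kn).
  have SP := SP_second S D L P b cp (z k) tau HS gS lP cp0 HP b0 PP H1 Dz DPLz tau0.
  have Dz' : D (P (z k)) by rewrite F1.
  have DGz' : D (P (P (L (P (z k))))) by rewrite F1 PP.
  have T2 := second_order HT gT K1 HK Dz' DGz' tau tau0 taut.
  rewrite /= F1 !PP in T2.
  have QLz := QL_bound S D L P b cp (z k) gS lP cp0 HP H2 F1 Dz.
  have QLw := QL_bound S D L P b cp (P (L (z k))) gS lP cp0 HP H2 (PP _) DPLz.
  have nLz : `|L (z k)| <= (1 + b) * W.
    have -> : L (z k) = (L (z k) - P (L (z k))) + P (L (z k)) by rewrite subrK.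
    apply: (le_trans (ler_normD _ _)); rewrite mulrDl mul1r addrC.
    apply: lerD => //; apply: (le_trans QLz); exact: ler_wpM2l.
  have nLw : `|L (P (L (z k)))| <= (1 + b) * W.
    set w := P (L (z k)) in QLw nPLPL *.
    have -> : L w = (L w - P (L w)) + P (L w) by rewrite subrK.
    apply: (le_trans (ler_normD _ _)); rewrite mulrDl mul1r addrC.
    apply: lerD => //; apply: (le_trans QLw); exact: ler_wpM2l.
  rewrite zS.
  have -> : P (S tau (z k)) - T tau (z k) =
      P (S tau (z k) - z k - tau *: L (z k)) - (T tau (z k) - z k - tau *: P (L (z k))).
    by rewrite !(linB lP) (linZ lP) F1 grp4.
  apply: (le_trans (ler_normB _ _)).
  apply: (le_trans (lerD SP T2)).
  rewrite -!mulrDr; apply: ler_wpM2l => //; apply: ler_wpM2l => //.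
  have i1 : b * `|L (z k)| <= b * ((1 + b) * W) by exact: ler_wpM2l.
  have i2 : cp * ((1 + 2) * `|L (P (L (z k)))|) <= cp * ((1 + 2) * ((1 + b) * W)).
    apply: ler_wpM2l => //; exact: ler_wpM2l.
  have i3 : (K + 2) * `|P (L (P (L (z k))))| <= (K + 2) * W.
    apply: ler_wpM2l => //; exact: addr_ge0.
  have -> : E2 * W = b * ((1 + b) * W) + cp * ((1 + 2) * ((1 + b) * W)) + (K + 2) * W.
    by rewrite /E2; ring.
  by apply: lerD => //; apply: lerD.
set N := fun y => M y - P y.
have lN : lin_op N.
  move=> a v w; rewrite /N lM lP scalerBr opprD addrACA //.
have HN : forall y, `|N y| <= delta * `|y|.
  by move=> y; have := Hpow 1%N isT y; rewrite expr1.
have NQ : forall y, N y = N (y - P y).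
  by move=> y; rewrite (linB lN) /N MP PP subrr subr0.
have PN : forall y, P (N y) = 0.
  by move=> y; rewrite /N (linB lP) PM PP subrr.
have lS : forall r, 0 <= r -> lin_op (S r) := fun r r0 => (Sb r r0).1.
have Scon : forall r v, 0 <= r -> `|S r v| <= `|v|.
  by move=> r v r0; have := Sc r r0 v; rewrite mul1r.
have QE : forall k, (k <= n)%N -> `|N (S tau (z k))| <= delta * (tau * b * W).
  move=> k kn; have [F1 [_ [_ [nz _]]]] := Fk k kn.
  rewrite NQ; apply: (le_trans (HN _)); apply: ler_wpM2l => //.
  have := H2 tau tau0 (z k); rewrite /= F1 => h; apply: (le_trans h).
  apply: ler_wpM2l => //; exact: mulr_ge0.
set A := fun y => M (S tau y).
have lA : lin_op A := lin_comp _ _ lM (lS _ tau0).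
have AE : forall v, A v = P (S tau v) + N (S tau v).
  by move=> v; rewrite /N addrC subrK.
have Acon : forall v, `|A v| <= `|v|.
  by move=> v; have := HMc (S tau v); rewrite mul1r => h; apply: (le_trans h); exact: Scon.
set cq := `|x - P x|.
have cq0 : 0 <= cq := normr_ge0 _.
set beta := delta * (tau * b * W).
have beta0 : 0 <= beta by rewrite !mulr_ge0.
set rho := tau * (tau * (E2 * W)).
have IND : forall k, (k <= n)%N -> exists a cc, iter k A x - z k = a + cc /\ P cc = 0 /\
    `|cc| <= delta ^+ k * cq + beta * u /\
    `|a| <= k%:R * (rho + tau * b * beta * u) + tau * b * cq * u * (1 - delta ^+ k).
  elim=> [|k IH] kn.
    exists 0, (x - P x); split; first by rewrite /z /= mul0r T0 add0r.
    split; first by rewrite (linB lP) PP subrr.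
    split; first by rewrite expr0 mul1r lerDl mulr_ge0.
    by rewrite normr0 expr0 subrr mulr0 mul0r add0r.
  have [a [cc [Ek [Pc [Hc Ha]]]]] := IH (ltnW kn).
  have Hk : iter k A x = a + cc + z k by apply/eqP; rewrite -subr_eq; apply/eqP.
  exists (A a + P (S tau cc) + (P (S tau (z k)) - z k.+1)), (N (S tau cc) + N (S tau (z k))).
  split.
    by rewrite iterS Hk (linD lA) (linD lA) (AE cc) (AE (z k)) grp5.
  split; first by rewrite (linD lP) !PN addr0.
  have Scc : `|S tau cc| <= `|cc| := Scon _ _ tau0.
  split.
    apply: (le_trans (ler_normD _ _)).
    apply: (le_trans (lerD (le_trans (HN _) (ler_wpM2l dl0 Scc)) (QE k (ltnW kn)))).
    apply: (le_trans (lerD (ler_wpM2l dl0 Hc) (lexx _))).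
    apply: eqle; rewrite /u /beta exprS; field => //.
  apply: (le_trans (ler_normD _ _)); apply: (le_trans (lerD (ler_normD _ _) (lexx _))).
  have hA := Acon a.
  have hP : `|P (S tau cc)| <= tau * b * `|cc|.
    have := H1 tau tau0 cc; rewrite /= Pc subr0; exact.
  have hL := LE k kn.
  have hc : tau * b * `|cc| <= tau * b * (delta ^+ k * cq + beta * u).
    apply: ler_wpM2l => //; exact: mulr_ge0.
  have : `|A a| + `|P (S tau cc)| + `|P (S tau (z k)) - z k.+1| <=
      `|a| + tau * b * (delta ^+ k * cq + beta * u) + rho.
    by apply: lerD => //; apply: lerD => //; apply: le_trans hP hc.
  move=> h; apply: (le_trans h).
  apply: (le_trans (lerD (lerD Ha (lexx _)) (lexx _))).
  apply: eqle; rewrite /u exprS -addn1 natrD; field => //.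
have nRn : n%:R != 0 :> R by rewrite gt_eqF.
have [a [cc [Ea [_ [Hc Ha]]]]] := IND n (leqnn n).
have zn : z n = T t (P x) by rewrite /z /tau mulrC divfK.
rewrite -zn Ea.
apply: (le_trans (ler_normD a cc)).
have hdn := pow_le_inv delta n dl0 d1 n0.
have cqb : cq <= (1 + cp) * N0.
  have h1 := ler_normB x (P x); have h2 := HP x.
  have h3 : (1 + cp) * `|x| <= (1 + cp) * N0 by apply: ler_wpM2l => //; exact: addr_ge0.
  rewrite /cq; lra.
have f1 : tau * b * cq * u * (1 - delta ^+ n) <= tau * b * ((1 + cp) * N0) * u.
  have e1 : 0 <= 1 - delta ^+ n by rewrite subr_ge0 exprn_ile1 // ltW.
  have e2 : 1 - delta ^+ n <= 1 by rewrite lerBlDr lerDl exprn_ge0.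
  apply: (le_trans (ler_wpM2l _ e2)); first by rewrite !mulr_ge0.
  rewrite mulr1; apply: ler_wpM2r => //; apply: ler_wpM2l => //; exact: mulr_ge0.
have f2 : delta ^+ n * cq <= u / n%:R * ((1 + cp) * N0).
  apply: ler_pM => //; exact: exprn_ge0.
have eqQ : n%:R * (rho + tau * b * beta * u) + tau * b * ((1 + cp) * N0) * u
    + u / n%:R * ((1 + cp) * N0) + beta * u = c0 / n%:R * N0.
  rewrite /c0 /rho /beta /W /Kc /tau /u /E2 /N0 /cp; field; by rewrite ?nRn ?d1n.
have fin : c0 / n%:R * N0 <= (c0 + 1) / n%:R * N0 + delta ^+ n * `|x|.
  have g1 : 0 <= N0 / n%:R by rewrite divr_ge0 // ltW.
  have g2 : 0 <= delta ^+ n * `|x| by rewrite mulr_ge0 // exprn_ge0.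
  have -> : (c0 + 1) / n%:R * N0 = c0 / n%:R * N0 + N0 / n%:R by rewrite /c0 /u /E2 /N0 /cp /Kc; field; by rewrite ?nRn ?d1n.
  lra.
apply: (le_trans _ fin); rewrite -eqQ.
have := lerD (lerD Ha Hc) (lexx 0).
lra.
Qed.
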